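(* Let $(E,d)$ be a Polish space and $\mu\in(0,1)$. For any $f\in D^{\mu}([0,1],E)$, \[ \tfrac12[f]_{\sim\mu}\le[f]_{\mu}\le 2[f]_{\sim\mu}. \]
   Context: $D([0,1],E)$ is the space of càdlàg $E$-valued functions on $[0,1]$. For $0\le s\le t\le u\le 1$, $\Delta(f;s,t,u)=d(f(s),f(t))\wedge d(f(t),f(u))$, and $[f]_\mu=\sup_{0\le s\le t\le u\le 1}\frac{\Delta(f;s,t,u)}{|u-s|^\mu}$. $D^{\mu}([0,1],E)$ is the set of $f\in D([0,1],E)$ with $[f]_\mu+\sup_{t\in(0,1]}\frac{d(f(0),f(t))}{t^\mu}+\sup_{t\in[0,1)}\frac{d(f(1),f(t))}{|1-t|^\mu}<\infty$. For $0\le\sigma<\tau\le1$, $N(f;(\sigma,\tau))=\inf_{\sigma<\theta\le\tau}\sup_{s\in[\sigma,\theta),\,u\in[\theta,\tau]}\left[d(f(\sigma),f(s))\vee d(f(u),f(\tau))\right]$; for $\eta>0$, $N(f;\eta)=\sup_{0\le\sigma<\tau\le 1,\ \tau-\sigma\le\eta}N(f;(\sigma,\tau))$; and $[f]_{\sim\mu}=\sup_{\eta>0}\frac{N(f;\eta)}{\eta^\mu}$. *)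

(* Defs.v *)
From HB Require Import structures.
From mathcomp Require Import all_boot all_order all_algebra.
From mathcomp Require Import all_classical all_reals all_analysis.
Set Implicit Arguments. Unset Strict Implicit. Unset Printing Implicit Defensive.
Import Order.TTheory GRing.Theory Num.Theory.
Local Open Scope classical_set_scope.
Local Open Scope ring_scope.

Section Defs.
Variables (R : realType) (E : Type) (d : E -> E -> R).

Definition is_metric : Prop :=
  [/\ forall x y, 0 <= d x y,
      forall x y, d x y = 0 <-> x = y,
      forall x y, d x y = d y x &
      forall x y z, d x z <= d x y + d y z].

Definition cauchy_seq (u : nat -> E) : Prop :=
  forall eps : R, 0 < eps -> exists N : nat, forall m n : nat,
    (N <= m)%N -> (N <= n)%N -> d (u m) (u n) < eps.

Definition converges_to (u : nat -> E) (l : E) : Prop :=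
  forall eps : R, 0 < eps -> exists N : nat, forall n : nat,
    (N <= n)%N -> d (u n) l < eps.

Definition is_polish : Prop :=
  [/\ is_metric,
      (forall u, cauchy_seq u -> exists l, converges_to u l) &
      exists q : nat -> E, forall x (eps : R), 0 < eps ->
        exists n, d x (q n) < eps].

(* f : R -> E, only values on [0,1] matter. Cadlag on [0,1]:
   right-continuous on [0,1), left limits on (0,1]. *)
Definition cadlag (f : R -> E) : Prop :=
  (forall t, 0 <= t < 1 -> forall eps : R, 0 < eps ->
     exists2 delta : R, 0 < delta & forall s, t <= s <= 1 -> s < t + delta ->
       d (f s) (f t) < eps) /\
  (forall t, 0 < t <= 1 -> exists l : E, forall eps : R, 0 < eps ->
     exists2 delta : R, 0 < delta & forall s, 0 <= s < t -> t - delta < s ->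
       d (f s) l < eps).

Definition Delta (f : R -> E) (s t u : R) : R :=
  Num.min (d (f s) (f t)) (d (f t) (f u)).

Definition holder_semi (mu : R) (f : R -> E) : \bar R :=
  ereal_sup [set x | exists s t u : R,
     [/\ 0 <= s, s <= t, t <= u, u <= 1 &
         x = ((Delta f s t u) / (`|u - s| `^ mu))%:E]].

Definition holder_left (mu : R) (f : R -> E) : \bar R :=
  ereal_sup [set x | exists t : R, [/\ 0 < t, t <= 1 &
     x = (d (f 0) (f t) / (t `^ mu))%:E]].

Definition holder_right (mu : R) (f : R -> E) : \bar R :=
  ereal_sup [set x | exists t : R, [/\ 0 <= t, t < 1 &
     x = (d (f 1) (f t) / (`|1 - t| `^ mu))%:E]].

Definition in_Dmu (mu : R) (f : R -> E) : Prop :=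
  cadlag f /\
  (holder_semi mu f + holder_left mu f + holder_right mu f < +oo)%E.

Definition Nint (f : R -> E) (sigma tau : R) : \bar R :=
  ereal_inf [set y | exists theta : R, [/\ sigma < theta, theta <= tau &
     y = ereal_sup [set x | exists s u : R,
        [/\ sigma <= s, s < theta, theta <= u, u <= tau &
            x = (Num.max (d (f sigma) (f s)) (d (f u) (f tau)))%:E]]]].

Definition Neta (f : R -> E) (eta : R) : \bar R :=
  ereal_sup [set y | exists sigma tau : R,
     [/\ 0 <= sigma, sigma < tau, tau <= 1, tau - sigma <= eta &
         y = Nint f sigma tau]].

Definition holder_tilde (mu : R) (f : R -> E) : \bar R :=
  ereal_sup [set y | exists eta : R, 0 < eta /\
     y = (Neta f eta * ((eta `^ mu)^-1)%:E)%E].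

End Defs.

(* Main.v *)
Require Import Defs.
From HB Require Import structures.
From mathcomp Require Import all_boot all_order all_algebra.
From mathcomp Require Import all_classical all_reals all_analysis.
From mathcomp Require Import lra.
Import Order.TTheory GRing.Theory Num.Theory.
Local Open Scope ring_scope.

Section Aux.
Variables (R : realType) (E : Type) (d : E -> E -> R) (f : R -> E).
Hypothesis d0 : forall x y, 0 <= d x y.
Hypothesis dxx : forall x, d x x = 0.
Hypothesis dS : forall x y, d x y = d y x.
Hypothesis dT : forall x y z, d x z <= d x y + d y z.

Lemma Nint_ge0 sigma tau : sigma < tau -> (0 <= Nint d f sigma tau)%E.
Proof.
move=> st; apply: le_ereal_inf_tmp => y [th [sth thu ->]].
apply: le_ereal_sup_tmp.
exists (Num.max (d (f sigma) (f sigma)) (d (f tau) (f tau)))%:E.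
  by exists sigma, tau; split.
by rewrite lee_fin le_max d0.
Qed.

Lemma DeltaN s t u : s <= t -> t <= u ->
  ((Delta d f s t u)%:E <= Nint d f s u)%E.
Proof.
move=> st tu; apply: le_ereal_inf_tmp => y [th [sth thu ->]].
apply: le_ereal_sup_tmp.
case: (ltP t th) => h.
  exists (Num.max (d (f s) (f t)) (d (f u) (f u)))%:E.
    by exists t, u; split.
  by rewrite lee_fin /Delta ge_min !le_max lexx.
exists (Num.max (d (f s) (f s)) (d (f t) (f u)))%:E.
  by exists s, t; split.
by rewrite lee_fin /Delta ge_min !le_max lexx !orbT.
Qed.

Hypothesis rc : forall t, 0 <= t < 1 -> forall eps : R, 0 < eps ->
     exists2 delta : R, 0 < delta & forall s, t <= s <= 1 -> s < t + delta ->
       d (f s) (f t) < eps.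

Lemma key sigma tau C : 0 <= sigma -> sigma < tau -> tau <= 1 -> 0 <= C ->
  (forall s t u, sigma <= s -> s <= t -> t <= u -> u <= tau ->
     Delta d f s t u <= C) ->
  (Nint d f sigma tau <= (2 * C)%:E)%E.
Proof.
move=> s0 st t1 C0 HD.
apply/lee_addgt0Pr => eps eps0.
set K := C + eps.
have K0 : 0 < K by rewrite /K; lra.
pose A : set R := fun t => (sigma <= t <= tau /\ K < d (f sigma) (f t)) \/ t = tau.
have Atau : A tau by right.
have Ale : forall t, A t -> t <= tau by move=> t [[/andP[_ ?] _]|->].
have Age : forall t, A t -> sigma <= t.
  by move=> t [[/andP[? _] _]|->] //; exact: ltW.
have hasA : has_inf A by split; [exists tau | exists sigma => t /Age].
set th := inf A.
have thA : forall t, A t -> th <= t by move=> t At; exact: (ge_inf hasA.2 At).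
have thle : th <= tau by exact: thA.
have P : forall t, A t -> forall u, t <= u -> u <= tau -> d (f t) (f u) <= C.
  move=> t [[/andP[st' tt] Kd]|->] u tu ut.
    have := HD sigma t u (lexx _) st' tu ut.
    rewrite /Delta ge_min => /orP[h|//].
    rewrite /K in Kd; exfalso; lra.
  have -> : u = tau by apply/le_anti; rewrite tu ut.
  by rewrite dxx.
have sth : sigma < th.
  have h1 : 0 <= sigma < 1 by apply/andP; split=> //; lra.
  have [dl dl0 Hdl] := rc sigma h1 K K0.
  apply: (lt_le_trans (y := Num.min (sigma + dl) tau)).
    by rewrite lt_min st andbT; lra.
  apply: lb_le_inf; first by exists tau.
  move=> t [[/andP[st' tt] Kd]|->]; last by rewrite ge_min lexx orbT.
  rewrite ge_min; case: (ltP t (sigma + dl)) => h //.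
  have := Hdl t ltac:(apply/andP; split=> //; lra) h.
  rewrite dS => h2; exfalso; lra.
apply: (le_trans (y := ereal_sup [set x | exists s u : R,
        [/\ sigma <= s, s < th, th <= u, u <= tau &
            x = (Num.max (d (f sigma) (f s)) (d (f u) (f tau)))%:E]])).
  by apply: ereal_inf_lbound; exists th; split.
apply: ge_ereal_sup => x [s [u [ss sth' thu ut ->]]].
rewrite -EFinD lee_fin ge_max; apply/andP; split.
  have nA : ~ A s by move=> As; have := thA s As; lra.
  rewrite leNgt; apply/negP => h.
  have : d (f sigma) (f s) <= K.
    rewrite leNgt; apply/negP => h2; apply: nA; left; split => //.
    by apply/andP; split => //; lra.
  rewrite /K; lra.
have [t [At tht dtu]] : exists t, [/\ A t, th <= t & d (f t) (f u) <= K].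
  case: (ltP th u) => thu'.
    have [t At tlt] := inf_adherent (eps := u - th) ltac:(lra) hasA.
    exists t; split => //; first exact: thA.
    have := P t At u ltac:(rewrite /th in tlt; lra) ut; rewrite /K; lra.
  have eu : u = th by apply/le_anti; rewrite thu' thu.
  case: (pselect (A th)) => Ath.
    by exists th; split => //; rewrite eu dxx; lra.
  have thtau : th < tau.
    by rewrite lt_neqAle thle andbT; apply/eqP => e; apply: Ath; rewrite e.
  have h1 : 0 <= th < 1 by apply/andP; split; lra.
  have [dl dl0 Hdl] := rc th h1 K K0.
  have [t At tlt] := inf_adherent dl0 hasA.
  exists t; split => //; first exact: thA.
  rewrite eu; apply/ltW/Hdl => //.
  have := thA t At; have := Ale t At; move=> *; apply/andP; split; lra.
have := P t At tau (Ale t At) (lexx _).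
have := dT (f u) (f t) (f tau).
rewrite dS in dtu; rewrite /K in dtu; lra.
Qed.

End Aux.

Theorem lemma1 (R : realType) (E : Type) (d : E -> E -> R)
  (HE : is_polish d) (mu : R) (Hmu : 0 < mu < 1) (f : R -> E)
  (Hf : in_Dmu d mu f) :
  ((2^-1)%:E * holder_tilde d mu f <= holder_semi d mu f)%E /\
  (holder_semi d mu f <= 2%:E * holder_tilde d mu f)%E.
Proof.
case: HE => [[d0 dE dS dT] _ _].
have dxx : forall x, d x x = 0 by move=> x; apply/dE.
case: Hf => [[rc _] _].
have mu0 : mu != 0 by apply/eqP => e; move: Hmu; rewrite e; lra.
have mu0' : 0 <= mu by move: Hmu => /andP[/ltW].
have tilde0 : (0 <= holder_tilde d mu f)%E.
  apply: le_ereal_sup_tmp.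
  exists (Neta d f 1 * ((1 `^ mu)^-1)%:E)%E; first by exists 1; split.
  rewrite powR1 invr1 mule1.
  apply: le_ereal_sup_tmp; exists (Nint d f 0 1).
    by exists 0, 1; split => //; rewrite subr0.
  exact: Nint_ge0.
have HD : forall s t u, 0 <= s -> s <= t -> t <= u -> u <= 1 ->
   ((Delta d f s t u / (`|u - s| `^ mu))%:E <= holder_semi d mu f)%E.
  by move=> s t u *; apply: ereal_sup_ubound; exists s, t, u; split.
have hs0 : (0 <= holder_semi d mu f)%E.
  have := HD 0 0 0 (lexx _) (lexx _) (lexx _) ler01.
  by rewrite /Delta dxx minxx mul0r.
split.
  move: HD hs0; case: (holder_semi d mu f) => [c| |] // HD hs0; last by rewrite leey.
  rewrite lee_fin in hs0.
  have tl : (holder_tilde d mu f <= (2 * c)%:E)%E.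
    apply: ge_ereal_sup => y [eta [eta0 ->]].
    have p0 : 0 < eta `^ mu by exact: powR_gt0.
    have -> : (2 * c)%:E = ((2 * (c * eta `^ mu))%:E * ((eta `^ mu)^-1)%:E)%E.
      by rewrite -EFinM mulrA mulfK // gt_eqF.
    apply: lee_wpmul2r; first by rewrite lee_fin invr_ge0 ltW.
    apply: ge_ereal_sup => z [sg [ta [sg0 st ta1 h ->]]].
    apply: (@key R E d f dxx dS dT rc) => //; first by rewrite mulr_ge0 // ltW.
    move=> s t u ss stt tu ut.
    case: (eqVneq s u) => [esu|nsu].
      have et : t = s by apply/le_anti; rewrite stt andbT esu.
      rewrite et -esu /Delta dxx minxx; rewrite mulr_ge0 // ltW //.
    have su : 0 < u - s by rewrite subr_gt0 lt_neqAle nsu /=; exact: (le_trans stt).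
    have := HD s t u ltac:(lra) stt tu ltac:(lra).
    rewrite lee_fin ler_pdivrMr; last by apply: powR_gt0; rewrite gtr0_norm.
    move/le_trans; apply; apply: ler_wpM2l => //.
    apply: ge0_ler_powR => //; rewrite ?nnegrE //; first exact: ltW.
    rewrite gtr0_norm //; lra.
  apply: le_trans (_ : ((2^-1)%:E * (2 * c)%:E <= _)%E).
    by apply: lee_wpmul2l => //; rewrite lee_fin invr_ge0.
  by rewrite -EFinM mulrA mulVf // mul1r.
apply: (@le_trans _ _ (holder_tilde d mu f)).
  apply: ge_ereal_sup => x [s [t [u [s0 st tu u1 ->]]]].
  case: (eqVneq s u) => [esu|nsu].
    by rewrite esu subrr normr0 powR0 // invr0 mulr0.
  have su : 0 < u - s by rewrite subr_gt0 lt_neqAle nsu /=; exact: (le_trans st).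
  apply: le_ereal_sup_tmp.
  exists (Neta d f (u - s) * (((u - s) `^ mu)^-1)%:E)%E; first by exists (u - s); split.
  rewrite gtr0_norm // EFinM.
  apply: lee_wpmul2r; first by rewrite lee_fin invr_ge0 powR_ge0.
  apply: le_ereal_sup_tmp; exists (Nint d f s u).
    by exists s, u; split => //; lra.
  exact: DeltaN.
move: tilde0; case: (holder_tilde d mu f) => [r| |] //.
  by rewrite !lee_fin => r0; lra.
by rewrite gt0_muley // lte_fin.
Qed.
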